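(* Let $\mathcal{F}=(W,\preceq,\mathcal{V})$ be a finite poset model and $B\subseteq W\times W$ a weak $\pm$-bisimulation. For all $w_1,w_2$ with $B(w_1,w_2)$ and every $\downarrow$-path $\pi_1:[0;k_1]\to W$ from $w_1$, there is a $\downarrow$-path $\pi_2:[0;k_2]\to W$ from $w_2$ such that $B(\pi_1(k_1),\pi_2(k_2))$ and for each $j\in[0;k_2)$ there is $i\in[0;k_1)$ with $B(\pi_1(i),\pi_2(j))$.
   Context: Fix a set PL of proposition letters. A poset model is $\mathcal{F}=(W,\preceq,\mathcal{V})$ with $(W,\preceq)$ a partial order and $\mathcal{V}:\mathrm{PL}\to\mathcal{P}(W)$. $[m;n]=\{i\in\mathbb{N}:m\le i\le n\}$, $[m;n)=\{i:m\le i<n\}$. An undirected path of length $\ell$ from $w$ is $\pi:[0;\ell]\to W$ with $\pi(0)=w$ and, for each $i\in[0;\ell)$, $\pi(i)\preceq\pi(i+1)$ or $\pi(i+1)\preceq\pi(i)$. A $\downarrow$-path is an undirected path of length $\ell\ge1$ with $\pi(\ell)\preceq\pi(\ell-1)$. A $\pm$-path is a $\downarrow$-path of length $\ell\ge2$ with $\pi(0)\preceq\pi(1)$. A weak $\pm$-bisimulation is a symmetric relation $B\subseteq W\times W$ such that whenever $B(w_1,w_2)$: (1) for every $p\in\mathrm{PL}$, $w_1\in\mathcal{V}(p)$ iff $w_2\in\mathcal{V}(p)$; (2) for all $u_1,d_1\in W$ with ($w_1\preceq u_1$ or $u_1\preceq w_1$) and $d_1\preceq u_1$, there is a $\pm$-path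 $\pi_2:[0;\ell_2]\to W$ from $w_2$ with $B(d_1,\pi_2(\ell_2))$ and, for all $j\in[0;\ell_2)$, $B(w_1,\pi_2(j))$ or $B(u_1,\pi_2(j))$. *)

(* Defs.v *)
From mathcomp Require Import all_boot.
Set Implicit Arguments.
Unset Strict Implicit.
Unset Printing Implicit Defensive.

Record poset_model (PL : Type) (W : Type) := PosetModel {
  le : W -> W -> Prop;
  V : PL -> W -> Prop;
  le_refl : forall w, le w w;
  le_trans : forall u v w, le u v -> le v w -> le u w;
  le_antisym : forall u v, le u v -> le v u -> u = v
}.

(* An undirected path of length l from w, represented by pi : nat -> W,
   only values on [0; l] matter. *)
Definition undirected_path PL W (F : poset_model PL W) (w : W) (pi : nat -> W) (l : nat) : Prop :=
  pi 0 = w /\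
  forall i, i < l -> le F (pi i) (pi i.+1) \/ le F (pi i.+1) (pi i).

Definition down_path PL W (F : poset_model PL W) (w : W) (pi : nat -> W) (l : nat) : Prop :=
  undirected_path F w pi l /\ 1 <= l /\ le F (pi l) (pi l.-1).

Definition pm_path PL W (F : poset_model PL W) (w : W) (pi : nat -> W) (l : nat) : Prop :=
  down_path F w pi l /\ 2 <= l /\ le F (pi 0) (pi 1).

Definition weak_pm_bisimulation PL W (F : poset_model PL W) (B : W -> W -> Prop) : Prop :=
  (forall x y, B x y -> B y x) /\
  forall w1 w2, B w1 w2 ->
    (forall p, V F p w1 <-> V F p w2) /\
    (forall u1 d1, (le F w1 u1 \/ le F u1 w1) -> le F d1 u1 ->
       exists (pi2 : nat -> W) (l2 : nat),
         pm_path F w2 pi2 l2 /\ B d1 (pi2 l2) /\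
         forall j, j < l2 -> B w1 (pi2 j) \/ B u1 (pi2 j)).

(* Main.v *)
Require Import Defs.
From mathcomp Require Import all_boot.
From mathcomp Require Import zify.

Definition catp {W : Type} (p : nat -> W) (L : nat) (q : nat -> W) : nat -> W :=
  fun n => if n <= L then p n else q (n - L).

Lemma catp_l {W : Type} {p q : nat -> W} {L n} : n <= L -> catp p L q n = p n.
Proof. by rewrite /catp => ->. Qed.

Lemma catp_r {W : Type} {p q : nat -> W} {L n} : q 0 = p L -> L <= n -> catp p L q n = q (n - L).
Proof.
rewrite /catp => h0 hn; case: ifP => // hnl.
have -> : n = L by apply/eqP; rewrite eqn_leq hnl hn.
by rewrite subnn h0.
Qed.

Lemma catp_path {PL W : Type} (F : poset_model PL W) w p L q M :
  undirected_path F w p L -> undirected_path F (p L) q M ->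
  undirected_path F w (catp p L q) (L + M).
Proof.
move=> [hp0 hp] [hq0 hq]; split; first by rewrite catp_l.
move=> i hi.
case: (leqP L i) => hLi.
  rewrite !(catp_r hq0) //; last by lia.
  have -> : i.+1 - L = (i - L).+1 by lia.
  apply: hq; lia.
case: (ltnP i.+1 L) => h2.
  rewrite !catp_l //; [apply: hp; lia | lia].
have e : i.+1 = L by lia.
rewrite catp_l; last by lia.
rewrite (catp_r hq0); last by lia.
rewrite e subnn hq0 -e. apply: hp; lia.
Qed.

Theorem lemma9 (PL : Type) (W : finType) (F : poset_model PL W)
  (B : W -> W -> Prop) :
  weak_pm_bisimulation F B ->
  forall (w1 w2 : W), B w1 w2 ->
  forall (pi1 : nat -> W) (k1 : nat), down_path F w1 pi1 k1 ->
  exists (pi2 : nat -> W) (k2 : nat),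
    down_path F w2 pi2 k2 /\ B (pi1 k1) (pi2 k2) /\
    forall j, j < k2 -> exists i, i < k1 /\ B (pi1 i) (pi2 j).
Proof.
move=> [_ hB] w1 w2 h12 pi1 k1 [[h10 hstep] [hk1 hlast]].
have inv : forall m, m <= k1.-1 -> exists p L, undirected_path F w2 p L /\
   B (pi1 m) (p L) /\ forall j, j < L -> exists i, i <= m /\ B (pi1 i) (p j).
  elim=> [_|m IH hm].
    exists (fun _ => w2), 0; split; first by split => // i.
    by rewrite h10; split.
  have [p [L [hp [hb hj]]]] := IH (ltnW hm).
  have [_ hc] := hB _ _ hb.
  have [q [M [[[[hq0 hq] _] _] [hqb hqj]]]] :=
    hc (pi1 m.+1) (pi1 m.+1) (hstep m ltac:(lia)) (Defs.le_refl _ _).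
  exists (catp p L q), (L + M); split; first by apply: catp_path => //; rewrite hq0.
  have hq0' : q 0 = p L by [].
  split; first by rewrite (catp_r hq0') ?leq_addr // addKn.
  move=> j hjl; case: (leqP j L) => hjL.
    rewrite catp_l //.
    case: (ltnP j L) => hjL'.
      have [i [hi1 hi2]] := hj j hjL'; exists i; split => //; lia.
    have -> : j = L by lia.
    by exists m; split => //; lia.
  rewrite (catp_r hq0'); last by lia.
  case: (hqj (j - L) ltac:(lia)) => h; [exists m | exists m.+1]; split => //; lia.
have [p [L [hp [hb hj]]]] := inv k1.-1 (leqnn _).
have [_ hc] := hB _ _ hb.
have hk : k1.-1.+1 = k1 by lia.
have [q [M [[[[hq0 hq] [hM1 hql]] [hM2 _]] [hqb hqj]]]] :=
  hc (pi1 k1.-1) (pi1 k1) (or_introl (Defs.le_refl _ _)) ltac:(by []).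
have hq0' : q 0 = p L by [].
exists (catp p L q), (L + M); split; [split; [|split]|split].
- by apply: catp_path => //; rewrite hq0.
- lia.
- rewrite !(catp_r hq0'); try lia.
  have -> : L + M - L = M by lia.
  by have -> : (L + M).-1 - L = M.-1 by lia.
- by rewrite (catp_r hq0') ?leq_addr // addKn.
move=> j hjl; case: (leqP j L) => hjL.
  rewrite catp_l //.
  case: (ltnP j L) => hjL'.
    have [i [hi1 hi2]] := hj j hjL'; exists i; split => //; lia.
  have -> : j = L by lia.
  exists k1.-1; split => //; lia.
rewrite (catp_r hq0'); last by lia.
by case: (hqj (j - L) ltac:(lia)) => h; exists k1.-1; split => //; lia.
Qed.
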